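(* Let $p>1$, $N\ge m$, and $\lambda>0$ be fixed. For almost all $(A,y)\in\mathbb R^{m\times N}\times\mathbb R^m$, the unique optimal solution $x^*$ of $\min_{x\in\mathbb R^N}\frac12\|Ax-y\|_2^2+\lambda\|x\|_p^p$ satisfies $|\mathrm{supp}(x^* )|=N$.
   Context: $\|x\|_p:=(\sum_i|x_i|^p)^{1/p}$; $\mathrm{supp}(x)=\{i:x_i\ne0\}$. ''For almost all'' means outside a set of Lebesgue measure zero. *)

(* Defs.v *)
From Stdlib Require Import Reals Lra.
Open Scope R_scope.

Fixpoint rsum (n : nat) (f : nat -> R) : R :=
  match n with O => 0 | S k => rsum k f + f k end.
Fixpoint rprod (n : nat) (f : nat -> R) : R :=
  match n with O => 1 | S k => rprod k f * f k end.

(* |t|^p, with the convention 0^p = 0 (Stdlib's Rpower 0 p is 1) *)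
Definition abspow (p t : R) : R :=
  if Req_EM_T t 0 then 0 else Rpower (Rabs t) p.

(* vectors in R^n : functions nat -> R, only indices < n matter;
   matrices in R^{m x N} : functions nat -> nat -> R, indices i<m, j<N *)
Definition matvec (N : nat) (A : nat -> nat -> R) (x : nat -> R) (i : nat) : R :=
  rsum N (fun j => A i j * x j).

Definition objective (m N : nat) (p lam : R) (A : nat -> nat -> R) (y x : nat -> R) : R :=
  / 2 * rsum m (fun i => (matvec N A x i - y i) ^ 2)
  + lam * rsum N (fun j => abspow p (x j)).

Definition is_minimizer (m N : nat) (p lam : R) (A : nat -> nat -> R) (y x : nat -> R) : Prop :=
  forall z : nat -> R, objective m N p lam A y x <= objective m N p lam A y z.

Record box := mkBox {
  Alo : nat -> nat -> R; Ahi : nat -> nat -> R;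
  ylo : nat -> R; yhi : nat -> R }.

Definition box_wf (m N : nat) (b : box) : Prop :=
  (forall i j, (i < m)%nat -> (j < N)%nat -> Alo b i j <= Ahi b i j) /\
  (forall i, (i < m)%nat -> ylo b i <= yhi b i).

Definition in_box (m N : nat) (b : box) (A : nat -> nat -> R) (y : nat -> R) : Prop :=
  (forall i j, (i < m)%nat -> (j < N)%nat -> Alo b i j <= A i j <= Ahi b i j) /\
  (forall i, (i < m)%nat -> ylo b i <= y i <= yhi b i).

Definition box_vol (m N : nat) (b : box) : R :=
  rprod m (fun i => rprod N (fun j => Ahi b i j - Alo b i j))
  * rprod m (fun i => yhi b i - ylo b i).

Definition lebesgue_null (m N : nat) (S : (nat -> nat -> R) -> (nat -> R) -> Prop) : Prop :=
  forall eps : R, 0 < eps ->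
  exists B : nat -> box,
    (forall k, box_wf m N (B k)) /\
    (forall A y, S A y -> exists k, in_box m N (B k) A y) /\
    (forall n, rsum n (fun k => box_vol m N (B k)) <= eps).

(* Main.v *)
Require Import Defs.
From Stdlib Require Import Reals Lra Lia ClassicalEpsilon Classical Arith.
Open Scope R_scope.

Lemma rsum_ext n f g : (forall k, (k < n)%nat -> f k = g k) -> rsum n f = rsum n g.
Proof. induction n; simpl; intros H; auto. rewrite IHn, H; auto. Qed.

Lemma rprod_ext n f g : (forall k, (k < n)%nat -> f k = g k) -> rprod n f = rprod n g.
Proof. induction n; simpl; intros H; auto. rewrite IHn, H; auto. Qed.

Lemma rsum_plus n f g : rsum n (fun k => f k + g k) = rsum n f + rsum n g.
Proof. induction n; simpl; [lra|rewrite IHn; lra]. Qed.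

Lemma rsum_minus n f g : rsum n (fun k => f k - g k) = rsum n f - rsum n g.
Proof. induction n; simpl; [lra|rewrite IHn; lra]. Qed.

Lemma rsum_scal n c f : rsum n (fun k => c * f k) = c * rsum n f.
Proof. induction n; simpl; [lra|rewrite IHn; lra]. Qed.

Lemma rsum_zero n : rsum n (fun _ => 0) = 0.
Proof. induction n; simpl; [lra|rewrite IHn; lra]. Qed.

Lemma rsum_const n c : rsum n (fun _ => c) = INR n * c.
Proof. induction n; simpl rsum; [simpl; lra|rewrite IHn, S_INR; lra]. Qed.

Lemma rsum_le n f g : (forall k, (k < n)%nat -> f k <= g k) -> rsum n f <= rsum n g.
Proof. induction n; simpl; intros H; [lra|]. pose proof (H n ltac:(lia)). pose proof (IHn ltac:(intros; apply H; lia)). lra. Qed.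

Lemma rsum_nonneg n f : (forall k, (k < n)%nat -> 0 <= f k) -> 0 <= rsum n f.
Proof. intros H. rewrite <- (rsum_zero n). apply rsum_le; auto. Qed.

Lemma rsum_abs n f : Rabs (rsum n f) <= rsum n (fun k => Rabs (f k)).
Proof. induction n; simpl. rewrite Rabs_R0; lra.
  eapply Rle_trans; [apply Rabs_triang|]. lra. Qed.

Lemma rsum_term_le n f k : (forall j, (j < n)%nat -> 0 <= f j) -> (k < n)%nat -> f k <= rsum n f.
Proof. induction n; intros H Hk; [lia|]. simpl.
  destruct (Nat.eq_dec k n). subst. pose proof (rsum_nonneg n f ltac:(intros; apply H; lia)). lra.
  pose proof (IHn ltac:(intros; apply H; lia) ltac:(lia)). pose proof (H n ltac:(lia)). lra. Qed.

Lemma rsum_isolate n f i : (i < n)%nat ->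
  rsum n f = f i + rsum n (fun k => if Nat.eq_dec k i then 0 else f k).
Proof. induction n; intros Hi; [lia|]. simpl.
  destruct (Nat.eq_dec n i).
  - subst. rewrite (rsum_ext i (fun k => if Nat.eq_dec k i then 0 else f k) f).
    lra. intros k Hk. destruct (Nat.eq_dec k i); [lia|auto].
  - rewrite IHn by lia. lra. Qed.

Lemma rsum_single n i c : (i < n)%nat -> rsum n (fun k => if Nat.eq_dec k i then c else 0) = c.
Proof. intros Hi. rewrite (rsum_isolate _ _ i Hi). destruct (Nat.eq_dec i i); [|congruence].
  rewrite (rsum_ext _ _ (fun _ => 0)). rewrite rsum_zero; lra.
  intros k _. destruct (Nat.eq_dec k i); auto. Qed.

Lemma rsum_swap n M f : rsum n (fun i => rsum M (fun j => f i j)) = rsum M (fun j => rsum n (fun i => f i j)).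
Proof. induction n; simpl. rewrite rsum_zero; auto. rewrite IHn. rewrite <- rsum_plus. auto. Qed.

Lemma rsum_add a b f : rsum (a + b) f = rsum a f + rsum b (fun k => f (a + k)%nat).
Proof. induction b; simpl. rewrite Nat.add_0_r; lra. rewrite Nat.add_succ_r. simpl. rewrite IHb. lra. Qed.

Lemma rprod_add a b f : rprod (a + b) f = rprod a f * rprod b (fun k => f (a + k)%nat).
Proof. induction b; simpl. rewrite Nat.add_0_r; lra. rewrite Nat.add_succ_r. simpl. rewrite IHb. lra. Qed.

Lemma rprod_const n c : rprod n (fun _ => c) = c ^ n.
Proof. induction n; simpl; [auto|rewrite IHn; lra]. Qed.

Lemma rprod_single n i a c : (i < n)%nat ->
  rprod n (fun k => if Nat.eq_dec k i then a else c) = a * c ^ (n - 1).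
Proof. induction n; intros Hi; [lia|]. simpl rprod.
  destruct (Nat.eq_dec n i).
  - subst. rewrite (rprod_ext _ _ (fun _ => c)). rewrite rprod_const. replace (S i - 1)%nat with i by lia. lra.
    intros k Hk. destruct (Nat.eq_dec k i); [lia|auto].
  - rewrite IHn by lia. replace (S n - 1)%nat with (S (n - 1)) by lia. simpl. lra. Qed.

Lemma rsum_mono_len n K f : (forall k, 0 <= f k) -> (forall k, (K <= k)%nat -> f k = 0) -> rsum n f <= rsum K f.
Proof. intros H0 H1. induction n; simpl. apply rsum_nonneg; auto.
  destruct (Compare_dec.le_lt_dec K n). rewrite H1 by auto. lra.
  assert (rsum n f + f n <= rsum (S n) f) by (simpl; lra).
  clear IHn. assert (forall j, (j <= K)%nat -> rsum j f <= rsum K f).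
  { clear -H0. intros j Hj. induction Hj as [|K' Hj IH]. lra. simpl. pose proof (H0 K'). lra. }
  apply (H2 (S n)). lia. Qed.

Lemma Rpower_pos x y : 0 < Rpower x y.
Proof. unfold Rpower. apply exp_pos. Qed.

Lemma Rpower_one_base z : Rpower 1 z = 1.
Proof. unfold Rpower. rewrite ln_1, Rmult_0_r, exp_0. auto. Qed.

Lemma abspow_0 p : abspow p 0 = 0.
Proof. unfold abspow. destruct (Req_EM_T 0 0); [auto|congruence]. Qed.

Lemma abspow_pos_eq p t : 0 < t -> abspow p t = Rpower t p.
Proof. intros. unfold abspow. destruct (Req_EM_T t 0). lra. rewrite Rabs_right; lra. Qed.

Lemma abspow_nonneg p t : 0 <= abspow p t.
Proof. unfold abspow. destruct (Req_EM_T t 0). lra. left; apply Rpower_pos. Qed.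

Lemma abspow_abs p t : abspow p (Rabs t) = abspow p t.
Proof. unfold abspow. destruct (Req_EM_T t 0), (Req_EM_T (Rabs t) 0); auto.
  - subst. rewrite Rabs_R0 in n. lra.
  - exfalso. apply (Rabs_no_R0 t n e).
  - rewrite Rabs_Rabsolu. auto. Qed.

Lemma abspow_pos p t : t <> 0 -> 0 < abspow p t.
Proof. intros. unfold abspow. destruct (Req_EM_T t 0). congruence. apply Rpower_pos. Qed.

Lemma abspow_eq0 p t : abspow p t = 0 -> t = 0.
Proof. intros H. destruct (Req_EM_T t 0); auto. pose proof (abspow_pos p t n). lra. Qed.

Lemma Rpower_split s p : 0 < s -> Rpower s p = s * Rpower s (p - 1).
Proof. intros. replace p with (1 + (p - 1)) at 1 by ring. rewrite Rpower_plus, Rpower_1; auto. Qed.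

Lemma abspow_ge p t : 1 <= p -> Rabs t - 1 <= abspow p t.
Proof. intros Hp. pose proof (abspow_nonneg p t). destruct (Rle_dec (Rabs t) 1). lra.
  rewrite <- abspow_abs. rewrite abspow_pos_eq by lra.
  rewrite <- (Rpower_1 (Rabs t)) at 1 by lra. pose proof (Rle_Rpower (Rabs t) 1 p ltac:(lra) Hp). lra. Qed.

Lemma bernoulli_strict s p : 1 < p -> 0 < s -> s <> 1 -> 1 + p * (s - 1) < Rpower s p.
Proof. intros Hp Hs Hs1.
  assert (Hd : forall c, 0 < c -> derivable_pt_lim (fun x => Rpower x p) c (p * Rpower c (p - 1))).
  { intros c Hc. apply derivable_pt_lim_power; auto. }
  destruct (Rlt_or_le 1 s).
  - destruct (MVT_cor2 (fun x => Rpower x p) (fun c => p * Rpower c (p-1)) 1 s H) as [c [Hc1 Hc2]].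
    { intros c Hc. apply Hd. lra. }
    rewrite Rpower_one_base in Hc1.
    assert (1 < Rpower c (p - 1)). { rewrite <- (Rpower_O c) at 1 by lra. apply Rpower_lt; lra. }
    assert (p * 1 * (s - 1) < p * Rpower c (p - 1) * (s - 1)).
    { apply Rmult_lt_compat_r. lra. apply Rmult_lt_compat_l; lra. } lra.
  - assert (s < 1) by lra.
    destruct (MVT_cor2 (fun x => Rpower x p) (fun c => p * Rpower c (p-1)) s 1 H0) as [c [Hc1 Hc2]].
    { intros c Hc. apply Hd. lra. }
    rewrite Rpower_one_base in Hc1.
    assert (Rpower c (p - 1) < 1). { rewrite <- (Rpower_one_base (p-1)) at 2. apply Rlt_Rpower_l; lra. }
    assert (p * Rpower c (p - 1) * (1 - s) < p * 1 * (1 - s)).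
    { apply Rmult_lt_compat_r. lra. apply Rmult_lt_compat_l; lra. } lra. Qed.

Lemma tangent_strict p u v : 1 < p -> 0 < u -> 0 <= v -> v <> u ->
  abspow p u + p * Rpower u (p - 1) * (v - u) < abspow p v.
Proof. intros Hp Hu Hv Hvu. rewrite abspow_pos_eq by auto.
  pose proof (Rpower_split u p Hu) as Hs. pose proof (Rpower_pos u (p-1)).
  destruct (Req_EM_T v 0).
  - subst. rewrite abspow_0. rewrite Hs. assert (0 < u * Rpower u (p-1)) by (apply Rmult_lt_0_compat; lra). nra.
  - rewrite abspow_pos_eq by lra.
    assert (Hv' : v = u * (v / u)) by (field; lra).
    pose proof (bernoulli_strict (v / u) p Hp ltac:(apply Rdiv_lt_0_compat; lra)
       ltac:(intro He; apply Hvu; rewrite Hv', He; ring)).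
    assert (Hvv : Rpower v p = Rpower u p * Rpower (v / u) p).
    { rewrite Rpower_mult_distr by (try apply Rdiv_lt_0_compat; lra). f_equal. field. lra. }
    rewrite Hvv.
    pose proof (Rpower_pos u p).
    assert (Rpower u p * (1 + p * (v / u - 1)) < Rpower u p * Rpower (v / u) p) by (apply Rmult_lt_compat_l; lra).
    assert (Rpower u p * (1 + p * (v / u - 1)) = Rpower u p + p * Rpower u (p - 1) * (v - u)).
    { rewrite Hs. field. lra. } lra. Qed.

Lemma tangent p u v : 1 < p -> 0 < u -> 0 <= v ->
  abspow p u + p * Rpower u (p - 1) * (v - u) <= abspow p v.
Proof. intros. destruct (Req_EM_T v u). subst. lra. left; apply tangent_strict; auto. Qed.

Lemma convex_nonneg p a b t : 1 < p -> 0 <= a -> 0 <= b -> 0 <= t <= 1 ->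
  abspow p ((1 - t) * a + t * b) <= (1 - t) * abspow p a + t * abspow p b.
Proof. intros Hp Ha Hb Ht. set (z := (1 - t) * a + t * b).
  assert (0 <= z) by (unfold z; nra).
  destruct (Req_EM_T z 0). rewrite e, abspow_0. pose proof (abspow_nonneg p a). pose proof (abspow_nonneg p b). nra.
  pose proof (tangent p z a Hp ltac:(lra) Ha). pose proof (tangent p z b Hp ltac:(lra) Hb).
  set (g := p * Rpower z (p - 1)) in *.
  assert ((1 - t) * (abspow p z + g * (a - z)) + t * (abspow p z + g * (b - z)) = abspow p z).
  { unfold z. ring. }
  assert ((1 - t) * (abspow p z + g * (a - z)) <= (1 - t) * abspow p a) by (apply Rmult_le_compat_l; lra).
  assert (t * (abspow p z + g * (b - z)) <= t * abspow p b) by (apply Rmult_le_compat_l; lra).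
  lra. Qed.

Lemma mid_strict_nonneg p a b : 1 < p -> 0 <= a -> 0 <= b -> a <> b ->
  abspow p ((a + b) / 2) < (abspow p a + abspow p b) / 2.
Proof. intros Hp Ha Hb Hab. set (z := (a + b) / 2).
  assert (0 < z). { unfold z. lra. }
  pose proof (tangent_strict p z a Hp H Ha ltac:(unfold z; lra)).
  pose proof (tangent_strict p z b Hp H Hb ltac:(unfold z; lra)).
  set (g := p * Rpower z (p - 1)) in *.
  assert (g * (a - z) + g * (b - z) = 0) by (unfold z; field). lra. Qed.

Lemma abspow_mono p a b : 1 < p -> 0 <= a <= b -> abspow p a <= abspow p b.
Proof. intros Hp Hab. destruct (Req_EM_T a 0). subst. rewrite abspow_0. apply abspow_nonneg.
  rewrite !abspow_pos_eq by lra. apply Rle_Rpower_l; lra. Qed.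

Lemma abspow_convex p a b t : 1 < p -> 0 <= t <= 1 ->
  abspow p ((1 - t) * a + t * b) <= (1 - t) * abspow p a + t * abspow p b.
Proof. intros Hp Ht. rewrite <- abspow_abs. rewrite <- (abspow_abs p a), <- (abspow_abs p b).
  eapply Rle_trans; [apply abspow_mono; auto|apply convex_nonneg; auto; apply Rabs_pos].
  split. apply Rabs_pos. eapply Rle_trans. apply Rabs_triang. rewrite !Rabs_mult.
  rewrite (Rabs_right t), (Rabs_right (1 - t)) by lra. lra. Qed.

Lemma abspow_mid_strict p a b : 1 < p -> a <> b ->
  abspow p ((a + b) / 2) < (abspow p a + abspow p b) / 2.
Proof. intros Hp Hab. rewrite <- (abspow_abs p ((a+b)/2)), <- (abspow_abs p a), <- (abspow_abs p b).
  destruct (Req_EM_T (Rabs a) (Rabs b)).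
  - assert (a = - b) by (destruct (Rcase_abs a), (Rcase_abs b); unfold Rabs in e;
       destruct (Rcase_abs a), (Rcase_abs b); lra).
    subst. replace ((- b + b) / 2) with 0 by field. rewrite Rabs_R0, abspow_0.
    assert (b <> 0) by lra. pose proof (abspow_pos p (Rabs (-b)) ltac:(apply Rabs_no_R0; lra)).
    pose proof (abspow_nonneg p (Rabs b)). lra.
  - eapply Rle_lt_trans; [|apply mid_strict_nonneg; auto; apply Rabs_pos].
    apply abspow_mono; auto. split. apply Rabs_pos.
    replace ((a + b) / 2) with (/2 * a + /2 * b) by field.
    eapply Rle_trans. apply Rabs_triang. rewrite !Rabs_mult, Rabs_right by lra. lra. Qed.

Lemma small_s p lam c : 1 < p -> 0 < lam -> 0 < c -> exists s, 0 < s /\ lam * abspow p s < s * c.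
Proof. intros Hp Hl Hc. set (s := Rpower (c / (2 * lam)) (/ (p - 1))). exists s.
  assert (0 < s) by apply Rpower_pos. split; auto.
  rewrite abspow_pos_eq by auto. rewrite Rpower_split by auto.
  unfold s at 2. rewrite Rpower_mult. replace (/ (p - 1) * (p - 1)) with 1 by (field; lra).
  rewrite Rpower_1 by (apply Rdiv_lt_0_compat; lra).
  replace (lam * (s * (c / (2 * lam)))) with (s * c / 2) by (field; lra). nra. Qed.

Lemma cont_eps f x : continuity_pt f x <->
  (forall eps, 0 < eps -> exists d, 0 < d /\ forall y, Rabs (y - x) < d -> Rabs (f y - f x) < eps).
Proof. unfold continuity_pt, continue_in, limit1_in, limit_in, D_x, no_cond, dist; simpl; unfold R_dist.
  split.
  - intros H eps He. destruct (H eps He) as [d [Hd H']]. exists d; split; auto.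
    intros y Hy. destruct (Req_EM_T y x). subst. rewrite Rminus_diag, Rabs_R0; auto.
    apply H'. split; auto.
  - intros H eps He. destruct (H eps He) as [d [Hd H']]. exists d; split; auto.
    intros y [_ Hy]. auto. Qed.

Lemma abspow_le_abs p x : 1 < p -> Rabs x <= 1 -> abspow p x <= Rabs x.
Proof. intros Hp Hx. rewrite <- abspow_abs. destruct (Req_EM_T (Rabs x) 0).
  rewrite e, abspow_0; lra. pose proof (Rabs_pos x).
  rewrite abspow_pos_eq by lra. rewrite Rpower_split by lra.
  assert (Rpower (Rabs x) (p - 1) <= 1).
  { rewrite <- (Rpower_one_base (p-1)) at 2. apply Rle_Rpower_l; lra. }
  pose proof (Rpower_pos (Rabs x) (p-1)). nra. Qed.

Lemma abspow_cont p t : 1 < p -> continuity_pt (abspow p) t.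
Proof. intros Hp. destruct (Req_EM_T t 0).
  - subst. apply cont_eps. intros eps He. exists (Rmin 1 eps). split. apply Rmin_pos; lra.
    intros y Hy. rewrite abspow_0, Rminus_0_r in *. rewrite Rabs_right by apply Rle_ge, abspow_nonneg.
    pose proof (Rmin_l 1 eps). pose proof (Rmin_r 1 eps).
    pose proof (abspow_le_abs p y Hp ltac:(lra)). lra.
  - assert (Hc : continuity_pt (fun x => Rpower (Rabs x) p) t).
    { apply (continuity_pt_comp Rabs (fun x => Rpower x p)). apply Rcontinuity_abs.
      apply derivable_continuous_pt. exists (p * Rpower (Rabs t) (p - 1)).
      apply derivable_pt_lim_power. pose proof (Rabs_pos t). pose proof (Rabs_no_R0 t n). lra. }
    rewrite cont_eps in Hc |- *. intros eps He. destruct (Hc eps He) as [d [Hd H]].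
    exists (Rmin d (Rabs t)). split. apply Rmin_pos; auto. pose proof (Rabs_pos t). pose proof (Rabs_no_R0 t n). lra.
    intros y Hy. pose proof (Rmin_l d (Rabs t)). pose proof (Rmin_r d (Rabs t)).
    assert (y <> 0). { intro; subst. rewrite Rminus_0_l, Rabs_Ropp in Hy. lra. }
    unfold abspow. destruct (Req_EM_T y 0); [congruence|]. destruct (Req_EM_T t 0); [congruence|].
    apply H. lra. Qed.

Lemma matvec_lin N A x v a b i :
  matvec N A (fun j => a * x j + b * v j) i = a * matvec N A x i + b * matvec N A v i.
Proof. unfold matvec. rewrite <- !rsum_scal, <- rsum_plus. apply rsum_ext. intros; ring. Qed.

Lemma matvec_ext N A x v i : (forall j, (j < N)%nat -> x j = v j) -> matvec N A x i = matvec N A v i.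
Proof. intros H. unfold matvec. apply rsum_ext. intros. rewrite H; auto. Qed.

Lemma subgrad m N p lam A y x : 1 < p -> 0 < lam -> is_minimizer m N p lam A y x -> forall v,
  rsum m (fun i => (y i - matvec N A x i) * (matvec N A v i - matvec N A x i))
  <= lam * rsum N (fun j => abspow p (v j)) - lam * rsum N (fun j => abspow p (x j)).
Proof. intros Hp Hl Hmin v.
  set (S := rsum m (fun i => (y i - matvec N A x i) * (matvec N A v i - matvec N A x i))).
  set (G := lam * rsum N (fun j => abspow p (v j)) - lam * rsum N (fun j => abspow p (x j))).
  set (Q := rsum m (fun i => (matvec N A v i - matvec N A x i) ^ 2)).
  assert (HQ : 0 <= Q) by (apply rsum_nonneg; intros; apply pow2_ge_0).
  assert (Ht : forall t, 0 < t <= 1 -> S <= G + t * Q / 2).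
  { intros t Ht. set (z := fun j => (1 - t) * x j + t * v j).
    pose proof (Hmin z) as Hz. unfold objective in Hz.
    assert (E1 : rsum m (fun i => (matvec N A z i - y i) ^ 2) =
       rsum m (fun i => (matvec N A x i - y i) ^ 2) - 2 * t * S + t ^ 2 * Q).
    { unfold S, Q. rewrite <- rsum_scal, <- (rsum_scal m (t^2)), <- rsum_minus, <- rsum_plus.
      apply rsum_ext. intros i _. unfold z. rewrite matvec_lin. ring. }
    assert (E2 : rsum N (fun j => abspow p (z j)) <=
       (1 - t) * rsum N (fun j => abspow p (x j)) + t * rsum N (fun j => abspow p (v j))).
    { rewrite <- !rsum_scal, <- rsum_plus. apply rsum_le. intros j _. unfold z. apply abspow_convex; lra. }
    rewrite E1 in Hz. unfold G.
    assert (lam * rsum N (fun j => abspow p (z j)) <= lam * ((1 - t) * rsum N (fun j => abspow p (x j)) + t * rsum N (fun j => abspow p (v j)))) by (apply Rmult_le_compat_l; lra).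
    assert (0 <= t * (G + t * Q / 2 - S)) by (unfold G; nra).
    apply Rmult_le_reg_l with t. lra. unfold G in *. nra. }
  destruct (Rle_dec S G); auto. exfalso.
  set (t := Rmin 1 ((S - G) / (Q + 1))).
  assert (0 < (S - G) / (Q + 1)) by (apply Rdiv_lt_0_compat; lra).
  assert (0 < t <= 1) by (unfold t; split; [apply Rmin_pos; lra| apply Rmin_l]).
  pose proof (Ht t H0). pose proof (Rmin_r 1 ((S - G) / (Q + 1))). fold t in H2.
  assert (t * (Q + 1) <= S - G). { apply Rmult_le_reg_r with (/ (Q + 1)). apply Rinv_0_lt_compat; lra.
    replace (t * (Q + 1) * / (Q + 1)) with t by (field; lra). auto. }
  nra. Qed.

Lemma matvec_zero N A i : matvec N A (fun _ => 0) i = 0.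
Proof. unfold matvec. rewrite (rsum_ext _ _ (fun _ => 0)). apply rsum_zero. intros; ring. Qed.

Lemma objective_nonneg m N p lam A y x : 0 < lam -> 0 <= objective m N p lam A y x.
Proof. intros. unfold objective. assert (0 <= rsum m (fun i => (matvec N A x i - y i) ^ 2)) by (apply rsum_nonneg; intros; apply pow2_ge_0).
  assert (0 <= rsum N (fun j => abspow p (x j))) by (apply rsum_nonneg; intros; apply abspow_nonneg). nra. Qed.

Lemma resid_bound m N p lam A y x : 0 < lam -> is_minimizer m N p lam A y x ->
  rsum m (fun i => (matvec N A x i - y i) ^ 2) <= rsum m (fun i => y i ^ 2)
  /\ lam * rsum N (fun j => abspow p (x j)) <= / 2 * rsum m (fun i => y i ^ 2).
Proof. intros Hl H. pose proof (H (fun _ => 0)) as H0. unfold objective in H0.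
  rewrite (rsum_ext m (fun i => (matvec N A (fun _ => 0) i - y i) ^ 2) (fun i => y i ^ 2)) in H0 by (intros; rewrite matvec_zero; ring).
  rewrite (rsum_ext N (fun j => abspow p 0) (fun _ => 0)) in H0 by (intros; apply abspow_0). rewrite rsum_zero in H0.
  assert (0 <= rsum N (fun j => abspow p (x j))) by (apply rsum_nonneg; intros; apply abspow_nonneg).
  assert (0 <= rsum m (fun i => (matvec N A x i - y i) ^ 2)) by (apply rsum_nonneg; intros; apply pow2_ge_0).
  split; nra. Qed.

Lemma obj_shift m N p lam A y y' w :
  objective m N p lam A y' w = objective m N p lam A y w
    + rsum m (fun i => (matvec N A w i - y i) * (y i - y' i)) + / 2 * rsum m (fun i => (y i - y' i) ^ 2).
Proof. unfold objective.
  assert (rsum m (fun i => (matvec N A w i - y' i) ^ 2) = rsum m (fun i => (matvec N A w i - y i) ^ 2)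
     + 2 * rsum m (fun i => (matvec N A w i - y i) * (y i - y' i)) + rsum m (fun i => (y i - y' i) ^ 2)).
  { rewrite <- rsum_scal, <- !rsum_plus. apply rsum_ext. intros; ring. }
  rewrite H. lra. Qed.

Lemma value_lip m N p lam A y y' w w' : is_minimizer m N p lam A y w ->
  objective m N p lam A y' w' <= objective m N p lam A y' w ->
  objective m N p lam A y' w' - objective m N p lam A y w <=
  rsum m (fun i => Rabs (matvec N A w i - y i) * Rabs (y i - y' i)) + / 2 * rsum m (fun i => (y i - y' i) ^ 2).
Proof. intros _ H. rewrite (obj_shift m N p lam A y y' w) in H.
  assert (rsum m (fun i => (matvec N A w i - y i) * (y i - y' i)) <= rsum m (fun i => Rabs (matvec N A w i - y i) * Rabs (y i - y' i))).
  { apply rsum_le. intros. rewrite <- Rabs_mult. apply Rle_abs. } lra. Qed.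

Lemma abs_le_sq t : Rabs t <= t ^ 2 + 1.
Proof. destruct (Rcase_abs t); unfold Rabs; destruct (Rcase_abs t); nra. Qed.

Definition yshift (A : nat -> nat -> R) (y : nat -> R) (N : nat) (t : R) := fun i => y i - A i N * t.
Definition upd (w : nat -> R) (N : nat) (t : R) := fun j => if Nat.eq_dec j N then t else w j.

Lemma obj_step m N p lam A y z :
  objective m (S N) p lam A y z = objective m N p lam A (yshift A y N (z N)) z + lam * abspow p (z N).
Proof. unfold objective, matvec, yshift. simpl rsum. rewrite Rmult_plus_distr_l.
  erewrite (rsum_ext m _ _). 2:{ intros i _. replace (rsum N (fun j => A i j * z j) + A i N * z N - y i) with
    (rsum N (fun j => A i j * z j) - (y i - A i N * z N)) by ring. reflexivity. } ring. Qed.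

Lemma obj_upd m N p lam A y w t :
  objective m N p lam A y (upd w N t) = objective m N p lam A y w.
Proof. unfold objective. f_equal. f_equal. apply rsum_ext. intros. rewrite (matvec_ext N A _ w). auto.
  intros j Hj. unfold upd. destruct (Nat.eq_dec j N); [lia|auto].
  f_equal. apply rsum_ext. intros j Hj. unfold upd. destruct (Nat.eq_dec j N); [lia|auto]. Qed.

Lemma exists_min m N p lam A y : 1 < p -> 0 < lam -> exists x, is_minimizer m N p lam A y x.
Proof. intros Hp Hl. revert y. induction N as [|N IH]; intros y.
  - exists (fun _ => 0). intros z. unfold objective, matvec. simpl. lra.
  - set (W := fun t => proj1_sig (constructive_indefinite_description _ (IH (yshift A y N t)))).
    assert (HW : forall t, is_minimizer m N p lam A (yshift A y N t) (W t)).
    { intros t. unfold W. destruct constructive_indefinite_description; auto. }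
    set (V := fun t => objective m N p lam A (yshift A y N t) (W t)).
    set (h := fun t => V t + lam * abspow p t).
    assert (Hres : forall t i, (i < m)%nat -> Rabs (matvec N A (W t) i - yshift A y N t i) <=
               rsum m (fun k => yshift A y N t k ^ 2) + 1).
    { intros t i Hi. eapply Rle_trans. apply abs_le_sq.
      destruct (resid_bound m N p lam A (yshift A y N t) (W t) Hl (HW t)) as [H1 _].
      pose proof (rsum_term_le m (fun i => (matvec N A (W t) i - yshift A y N t i) ^ 2) i
          ltac:(intros; apply pow2_ge_0) Hi). cbv beta in *. lra. }
    assert (HVc : forall t0, continuity_pt V t0).
    { intros t0. apply cont_eps. intros eps He.
      set (E := rsum m (fun k => (Rabs (y k) + Rabs (A k N) * (Rabs t0 + 1)) ^ 2) + 1).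
      assert (HE : forall s i, (i < m)%nat -> Rabs (s - t0) <= 1 ->
          Rabs (matvec N A (W s) i - yshift A y N s i) <= E).
      { intros s i Hi Hs. eapply Rle_trans. apply Hres; auto. unfold E. apply Rplus_le_compat_r.
        apply rsum_le. intros k _. unfold yshift. apply pow_maj_Rabs.
        eapply Rle_trans. apply Rabs_triang. rewrite Rabs_Ropp, Rabs_mult.
        apply Rplus_le_compat_l. apply Rmult_le_compat_l. apply Rabs_pos.
        pose proof (Rabs_triang_inv s t0). lra. }
      set (C := rsum m (fun i => E * Rabs (A i N)) + / 2 * rsum m (fun i => A i N ^ 2)).
      assert (HC0 : 0 <= C).
      { unfold C. assert (0 <= E). { unfold E. pose proof (rsum_nonneg m (fun k => (Rabs (y k) + Rabs (A k N) * (Rabs t0 + 1)) ^ 2) ltac:(intros; apply pow2_ge_0)). lra. }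
        assert (0 <= rsum m (fun i => E * Rabs (A i N))) by (apply rsum_nonneg; intros; apply Rmult_le_pos; auto; apply Rabs_pos).
        assert (0 <= rsum m (fun i => A i N ^ 2)) by (apply rsum_nonneg; intros; apply pow2_ge_0). lra. }
      assert (Hlip : forall s t, Rabs (s - t0) <= 1 -> Rabs (t - t0) <= 1 -> Rabs (s - t) <= 1 ->
                 V s - V t <= Rabs (s - t) * C).
      { intros s t Hs Ht Hst. unfold V. eapply Rle_trans. apply value_lip. apply HW. apply HW.
        unfold C. rewrite Rmult_plus_distr_l. rewrite <- (rsum_scal m (Rabs (s - t)) (fun i => E * Rabs (A i N))).
        replace (Rabs (s - t) * (/ 2 * rsum m (fun i => A i N ^ 2))) with (/ 2 * rsum m (fun i => Rabs (s - t) * A i N ^ 2)) by (rewrite rsum_scal; ring).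
        apply Rplus_le_compat.
        - apply rsum_le. intros i Hi. unfold yshift.
          replace (y i - A i N * t - (y i - A i N * s)) with (A i N * (s - t)) by ring. rewrite Rabs_mult.
          pose proof (HE t i Hi Ht). assert (0 <= Rabs (A i N) * Rabs (s - t)) by (apply Rmult_le_pos; apply Rabs_pos).
          apply Rle_trans with (E * (Rabs (A i N) * Rabs (s - t))); [apply Rmult_le_compat_r; auto | right; ring].
        - apply Rmult_le_compat_l. lra. apply rsum_le. intros i Hi. unfold yshift.
          replace (y i - A i N * t - (y i - A i N * s)) with (A i N * (s - t)) by ring.
          rewrite Rmult_comm. simpl. rewrite !Rmult_1_r.
          assert (H2 : (s - t) * (s - t) <= Rabs (s - t)).
          { revert Hst. unfold Rabs; destruct (Rcase_abs (s - t)); intros; nra. }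
          replace ((s - t) * A i N * ((s - t) * A i N)) with (((s - t) * (s - t)) * (A i N * A i N)) by ring.
          apply Rmult_le_compat_r; [apply Rle_0_sqr|auto]. }
      exists (Rmin 1 (eps / (C + 1))). split. apply Rmin_pos. lra. apply Rdiv_lt_0_compat; lra.
      intros s Hs. pose proof (Rmin_l 1 (eps / (C + 1))). pose proof (Rmin_r 1 (eps / (C + 1))).
      assert (Rabs (s - t0) * C < eps).
      { assert (Rabs (s - t0) * C <= eps / (C + 1) * C) by (apply Rmult_le_compat_r; lra).
        assert (eps / (C + 1) * C < eps). { unfold Rdiv. rewrite Rmult_assoc. 
          assert (/ (C + 1) * C < 1). { apply Rmult_lt_reg_l with (C + 1). lra. field_simplify; lra. } 
          nra. } lra. }
      pose proof (Hlip s t0 ltac:(lra) ltac:(rewrite Rminus_diag, Rabs_R0; lra) ltac:(lra)) as L1.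
      pose proof (Hlip t0 s ltac:(rewrite Rminus_diag, Rabs_R0; lra) ltac:(lra) ltac:(rewrite Rabs_minus_sym; lra)) as L2.
      rewrite Rabs_minus_sym in L2. apply Rabs_def1; lra. }
    assert (Hhc : forall t, continuity_pt h t).
    { intros t. unfold h. apply continuity_pt_plus. apply HVc. apply continuity_pt_scal. apply abspow_cont; auto. }
    assert (HV0 : forall t, 0 <= V t) by (intros; apply objective_nonneg; auto).
    set (T := h 0 / lam + 2).
    assert (Hh0 : 0 <= h 0) by (unfold h; rewrite abspow_0; pose proof (HV0 0); lra).
    assert (HT : 0 <= T) by (unfold T; assert (0 <= h 0 / lam) by (apply Rmult_le_pos; [auto| left; apply Rinv_0_lt_compat; auto]); lra).
    destruct (continuity_ab_min h (- T) T ltac:(lra) (fun c _ => Hhc c)) as [ts [Hts1 Hts2]].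
    assert (Hmin : forall t, h ts <= h t).
    { intros t. destruct (Rle_dec (Rabs t) T).
      - apply Hts1. revert r. unfold Rabs; destruct (Rcase_abs t); intros; lra.
      - pose proof (Hts1 0 ltac:(lra)). unfold h. pose proof (HV0 t).
        pose proof (abspow_ge p t ltac:(lra)).
        assert (lam * (Rabs t - 1) > h 0).
        { assert (lam * (T - 1) < lam * (Rabs t - 1)) by (apply Rmult_lt_compat_l; lra).
          assert (lam * (T - 1) = h 0 + lam) by (unfold T; field; lra). lra. }
        assert (lam * (Rabs t - 1) <= lam * abspow p t) by (apply Rmult_le_compat_l; lra). unfold h in *. lra. }
    exists (upd (W ts) N ts). intros z.
    rewrite obj_step. assert (Hu : upd (W ts) N ts N = ts) by (unfold upd; destruct (Nat.eq_dec N N); congruence).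
    rewrite Hu, obj_upd. rewrite obj_step.
    pose proof (Hmin (z N)). pose proof (HW (z N) z). unfold h, V in H. lra. Qed.

Lemma rsum_lt n f g j : (forall k, (k < n)%nat -> f k <= g k) -> (j < n)%nat -> f j < g j -> rsum n f < rsum n g.
Proof. intros H Hj Hfg. rewrite (rsum_isolate n f j Hj), (rsum_isolate n g j Hj).
  assert (rsum n (fun k => if Nat.eq_dec k j then 0 else f k) <= rsum n (fun k => if Nat.eq_dec k j then 0 else g k)).
  { apply rsum_le. intros k Hk. destruct (Nat.eq_dec k j); [lra|auto]. } lra. Qed.

Lemma unique_min m N p lam A y x z : 1 < p -> 0 < lam ->
  is_minimizer m N p lam A y x -> is_minimizer m N p lam A y z -> forall j, (j < N)%nat -> z j = x j.
Proof. intros Hp Hl Hx Hz j Hj. destruct (Req_EM_T (z j) (x j)); auto. exfalso.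
  set (mid := fun k => / 2 * x k + / 2 * z k).
  pose proof (Hx mid) as H1. pose proof (Hx z). pose proof (Hz x).
  assert (objective m N p lam A y mid < (objective m N p lam A y x + objective m N p lam A y z) / 2).
  { unfold objective.
    assert (rsum m (fun i => (matvec N A mid i - y i) ^ 2) <=
      (rsum m (fun i => (matvec N A x i - y i) ^ 2) + rsum m (fun i => (matvec N A z i - y i) ^ 2)) / 2).
    { unfold Rdiv. rewrite Rmult_comm, <- rsum_plus, <- rsum_scal. apply rsum_le. intros i _.
      unfold mid. rewrite matvec_lin. set (a := matvec N A x i). set (b := matvec N A z i).
      assert (0 <= (a - b) ^ 2) by apply pow2_ge_0. nra. }
    assert (rsum N (fun k => abspow p (mid k)) <
      (rsum N (fun k => abspow p (x k)) + rsum N (fun k => abspow p (z k))) / 2).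
    { unfold Rdiv. rewrite Rmult_comm, <- rsum_plus, <- rsum_scal. apply (rsum_lt _ _ _ j).
      - intros k _. unfold mid. replace (/ 2 * x k + / 2 * z k) with ((1 - /2) * x k + /2 * z k) by field.
        pose proof (abspow_convex p (x k) (z k) (/2) Hp ltac:(lra)). lra.
      - auto.
      - unfold mid. replace (/ 2 * x j + / 2 * z j) with ((x j + z j) / 2) by field.
        pose proof (abspow_mid_strict p (x j) (z j) Hp ltac:(auto)). lra. }
    assert (lam * rsum N (fun k => abspow p (mid k)) < lam * ((rsum N (fun k => abspow p (x k)) + rsum N (fun k => abspow p (z k))) / 2)) by (apply Rmult_lt_compat_l; auto).
    lra. }
  lra. Qed.

Definition upd' (x : nat -> R) (j : nat) (s : R) := fun k => if Nat.eq_dec k j then s else x k.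

Lemma matvec_upd' N A x j s i : (j < N)%nat ->
  matvec N A (upd' x j s) i - matvec N A x i = A i j * (s - x j).
Proof. intros Hj. unfold matvec. rewrite <- rsum_minus.
  rewrite (rsum_ext _ _ (fun k => if Nat.eq_dec k j then A i j * (s - x j) else 0)).
  apply rsum_single; auto. intros k _. unfold upd'. destruct (Nat.eq_dec k j). subst; ring. ring. Qed.

Lemma phi_upd' N p x j s : (j < N)%nat ->
  rsum N (fun k => abspow p (upd' x j s k)) - rsum N (fun k => abspow p (x k)) = abspow p s - abspow p (x j).
Proof. intros Hj. rewrite <- rsum_minus.
  rewrite (rsum_ext _ _ (fun k => if Nat.eq_dec k j then abspow p s - abspow p (x j) else 0)).
  apply rsum_single; auto. intros k _. unfold upd'. destruct (Nat.eq_dec k j). subst; ring. ring. Qed.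

Lemma zero_coord m N p lam A y x j : 1 < p -> 0 < lam -> is_minimizer m N p lam A y x -> (j < N)%nat -> x j = 0 ->
  rsum m (fun i => A i j * (y i - matvec N A x i)) = 0.
Proof. intros Hp Hl Hx Hj Hx0. set (c := rsum m (fun i => A i j * (y i - matvec N A x i))).
  assert (Hs : forall s, s * c <= lam * abspow p s).
  { intros s. pose proof (subgrad m N p lam A y x Hp Hl Hx (upd' x j s)) as H.
    rewrite (rsum_ext m _ (fun i => s * (A i j * (y i - matvec N A x i)))) in H.
    rewrite rsum_scal in H. fold c in H.
    assert (lam * rsum N (fun j0 => abspow p (upd' x j s j0)) - lam * rsum N (fun j0 => abspow p (x j0)) = lam * abspow p s).
    { rewrite <- Rmult_minus_distr_l, phi_upd' by auto. rewrite Hx0, abspow_0. ring. } lra.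
    intros i _. rewrite matvec_upd' by auto. rewrite Hx0. ring. }
  destruct (Rtotal_order c 0) as [Hc|[Hc|Hc]]; auto.
  - destruct (small_s p lam (- c) Hp Hl ltac:(lra)) as [s [Hs0 Hs1]].
    pose proof (Hs (- s)). rewrite <- (abspow_abs p (-s)), Rabs_Ropp, Rabs_right in H by lra.
    lra.
  - destruct (small_s p lam c Hp Hl ltac:(lra)) as [s [Hs0 Hs1]].
    pose proof (Hs s). lra. Qed.

Lemma resid_zero m N p lam A y x : 1 < p -> 0 < lam -> is_minimizer m N p lam A y x ->
  (forall i, (i < m)%nat -> y i - matvec N A x i = 0) -> forall i, (i < m)%nat -> y i = 0.
Proof. intros Hp Hl Hx Hr i Hi.
  pose proof (subgrad m N p lam A y x Hp Hl Hx (fun _ => 0)) as H.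
  rewrite (rsum_ext m _ (fun _ => 0)) in H by (intros k Hk; rewrite Hr; auto; ring).
  rewrite (rsum_ext N (fun j => abspow p 0) (fun _ => 0)) in H by (intros; apply abspow_0).
  rewrite !rsum_zero in H.
  assert (Hphi : rsum N (fun j => abspow p (x j)) = 0).
  { pose proof (rsum_nonneg N (fun j => abspow p (x j)) ltac:(intros; apply abspow_nonneg)). nra. }
  assert (Hx0 : forall k, (k < N)%nat -> x k = 0).
  { intros k Hk. apply (abspow_eq0 p). pose proof (rsum_term_le N (fun j => abspow p (x j)) k ltac:(intros; apply abspow_nonneg) Hk).
    pose proof (abspow_nonneg p (x k)). simpl in *. lra. }
  pose proof (Hr i Hi). rewrite (matvec_ext N A x (fun _ => 0)) in H0 by auto. rewrite matvec_zero in H0. lra. Qed.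

Definition zcol (A : nat -> nat -> R) (j : nat) := fun i k => if Nat.eq_dec k j then 0 else A i k.

Lemma min_zcol m N p lam A y x j : 1 < p -> 0 < lam -> is_minimizer m N p lam A y x -> (j < N)%nat -> x j = 0 ->
  is_minimizer m N p lam (zcol A j) y x.
Proof. intros Hp Hl Hx Hj Hx0 z.
  assert (E1 : forall w i, matvec N (zcol A j) w i = matvec N A (upd' w j 0) i).
  { intros w i. unfold matvec. apply rsum_ext. intros k _. unfold zcol, upd'. destruct (Nat.eq_dec k j); ring. }
  assert (E2 : objective m N p lam (zcol A j) y x = objective m N p lam A y x).
  { unfold objective. f_equal. f_equal. apply rsum_ext. intros i _. rewrite E1. f_equal. f_equal.
    apply matvec_ext. intros k _. unfold upd'. destruct (Nat.eq_dec k j); subst; auto. }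
  rewrite E2. eapply Rle_trans. apply (Hx (upd' z j 0)).
  unfold objective. apply Rplus_le_compat.
  - right. f_equal. apply rsum_ext. intros i _. rewrite E1. auto.
  - apply Rmult_le_compat_l. lra. apply rsum_le. intros k _. unfold upd'. destruct (Nat.eq_dec k j).
    rewrite abspow_0. apply abspow_nonneg. lra. Qed.

Lemma mul_le_abs a b U V : Rabs a <= U -> Rabs b <= V -> a * b <= U * V.
Proof. intros. eapply Rle_trans. apply Rle_abs. rewrite Rabs_mult.
  apply Rmult_le_compat; auto; apply Rabs_pos. Qed.

Lemma matvec_diff_bound N B B' w i d X : (forall k, (k < N)%nat -> Rabs (B i k - B' i k) <= d) ->
  (forall k, (k < N)%nat -> Rabs (w k) <= X) -> Rabs (matvec N B w i - matvec N B' w i) <= INR N * (d * X).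
Proof. intros HB HX. unfold matvec. rewrite <- rsum_minus. eapply Rle_trans. apply rsum_abs.
  rewrite <- rsum_const. apply rsum_le. intros k Hk. rewrite <- Rmult_minus_distr_r, Rabs_mult.
  apply Rmult_le_compat; auto; apply Rabs_pos. Qed.

Lemma holder m N p lam B B' y y' x x' d R X : 1 < p -> 0 < lam ->
  is_minimizer m N p lam B y x -> is_minimizer m N p lam B' y' x' ->
  (forall i k, (i < m)%nat -> (k < N)%nat -> Rabs (B i k - B' i k) <= d) ->
  (forall i, (i < m)%nat -> Rabs (y i - y' i) <= d) ->
  (forall i, (i < m)%nat -> Rabs (y i - matvec N B x i) <= R) ->
  (forall i, (i < m)%nat -> Rabs (y' i - matvec N B' x' i) <= R) ->
  (forall k, (k < N)%nat -> Rabs (x k) <= X) ->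
  (forall k, (k < N)%nat -> Rabs (x' k) <= X) ->
  forall i, (i < m)%nat ->
  ((y i - matvec N B x i) - (y' i - matvec N B' x' i)) ^ 2 <= INR m * (2 * R * d + 2 * (R * (INR N * (d * X)))).
Proof. intros Hp Hl Hx Hx' HB Hy HR HR' HX HX' i0 Hi0.
  pose proof (subgrad m N p lam B y x Hp Hl Hx x') as H1.
  pose proof (subgrad m N p lam B' y' x' Hp Hl Hx' x) as H2.
  set (r := fun i => y i - matvec N B x i). set (r' := fun i => y' i - matvec N B' x' i).
  set (Dl := fun i => matvec N B x' i - matvec N B' x' i).
  set (Dr := fun i => matvec N B' x i - matvec N B x i).
  assert (Hid : rsum m (fun i => (r i - r' i) ^ 2) =
     rsum m (fun i => (y i - matvec N B x i) * (matvec N B x' i - matvec N B x i))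
     + rsum m (fun i => (y' i - matvec N B' x' i) * (matvec N B' x i - matvec N B' x' i))
     + rsum m (fun i => (r i - r' i) * (y i - y' i) - r i * Dl i - r' i * Dr i)).
  { rewrite <- !rsum_plus. apply rsum_ext. intros i _. unfold r, r', Dl, Dr. ring. }
  assert (Hb : rsum m (fun i => (r i - r' i) * (y i - y' i) - r i * Dl i - r' i * Dr i) <=
     INR m * (2 * R * d + 2 * (R * (INR N * (d * X))))).
  { rewrite <- rsum_const. apply rsum_le. intros i Hi.
    assert (HDl : Rabs (Dl i) <= INR N * (d * X)) by (apply matvec_diff_bound; auto).
    assert (HDr : Rabs (- Dr i) <= INR N * (d * X)).
    { unfold Dr. rewrite Ropp_minus_distr. apply matvec_diff_bound; auto. }
    assert (HDl' : Rabs (- Dl i) <= INR N * (d * X)) by (rewrite Rabs_Ropp; auto).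
    assert (Hrr : Rabs (r i - r' i) <= 2 * R).
    { eapply Rle_trans. apply Rabs_triang. rewrite Rabs_Ropp. pose proof (HR i Hi). pose proof (HR' i Hi). unfold r, r'. lra. }
    pose proof (mul_le_abs _ _ _ _ Hrr (Hy i Hi)).
    pose proof (mul_le_abs _ _ _ _ (HR i Hi) HDl').
    pose proof (mul_le_abs _ _ _ _ (HR' i Hi) HDr). unfold r, r' in *. lra. }
  assert (rsum m (fun i => (r i - r' i) ^ 2) <= INR m * (2 * R * d + 2 * (R * (INR N * (d * X))))) by lra.
  pose proof (rsum_term_le m (fun i => (r i - r' i) ^ 2) i0 ltac:(intros; apply pow2_ge_0) Hi0).
  unfold r, r' in *. simpl in *. lra. Qed.

Local Open Scope nat_scope.
Lemma encode M D (Rel : nat -> nat -> Prop) : (0 < M)%nat ->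
  (forall s, (s < D)%nat -> exists q, (q < M)%nat /\ Rel s q) ->
  exists k, (k < M ^ D)%nat /\ forall s, (s < D)%nat -> Rel s ((k / M ^ s) mod M).
Proof. intros HM. induction D as [|D IH]; intros H.
  - exists 0%nat. split. simpl; lia. intros; lia.
  - destruct IH as [k [Hk Hk']]. intros s Hs; apply H; lia.
    destruct (H D ltac:(lia)) as [q [Hq Hq']].
    exists (k + q * M ^ D)%nat. split.
    + simpl. assert (k + q * M ^ D < (q + 1) * M ^ D)%nat by nia. nia.
    + intros s Hs. assert (HMs : M ^ s <> 0%nat) by (apply Nat.pow_nonzero; lia).
      destruct (Nat.eq_dec s D).
      * subst. rewrite Nat.div_add by auto. rewrite Nat.div_small by auto. simpl. rewrite Nat.mod_small; auto.
      * replace (k + q * M ^ D)%nat with (k + (q * M ^ (D - s - 1) * M) * M ^ s)%nat.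
        rewrite Nat.div_add by auto. rewrite Nat.Div0.mod_add. apply Hk'. lia.
        f_equal. rewrite <- !Nat.mul_assoc. f_equal. rewrite <- Nat.pow_succ_r'. rewrite <- Nat.pow_add_r. f_equal. lia. Qed.

Local Open Scope R_scope.
Lemma interval_pick (M : nat) (c u : R) : 0 < c -> (1 <= M)%nat -> 0 <= u <= INR M * c ->
  exists q, (q < M)%nat /\ INR q * c <= u <= INR q * c + c.
Proof. intros Hc. induction M as [|M IH]; intros HM Hu. lia.
  destruct (Nat.eq_dec M 0). subst. exists 0%nat. split. lia. simpl in *. lra.
  destruct (Rle_dec u (INR M * c)).
  - destruct (IH ltac:(lia) ltac:(lra)) as [q [Hq Hq']]. exists q. split; auto; lia.
  - exists M. split. lia. rewrite S_INR in Hu. lra. Qed.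

Section Flat.
Variables m N : nat.
Definition coord (A : nat -> nat -> R) (y : nat -> R) (t : nat) : R :=
  if Nat.ltb t (m * N) then A (t / N)%nat (t mod N)%nat else y (t - m * N)%nat.
Definition mkb (lo hi : nat -> R) : box :=
  mkBox (fun i j => lo (i * N + j)%nat) (fun i j => hi (i * N + j)%nat) (fun i => lo (m * N + i)%nat) (fun i => hi (m * N + i)%nat).

Lemma coordA A y i j : (i < m)%nat -> (j < N)%nat -> coord A y (i * N + j) = A i j.
Proof. intros Hi Hj. unfold coord. destruct (Nat.ltb_spec (i * N + j) (m * N)); [|nia].
  rewrite Nat.div_add_l by lia. rewrite Nat.div_small by auto. rewrite Nat.add_0_r.
  rewrite Nat.add_comm, Nat.Div0.mod_add, Nat.mod_small; auto. Qed.

Lemma coordy A y i : coord A y (m * N + i) = y i.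
Proof. unfold coord. destruct (Nat.ltb_spec (m * N + i) (m * N)); [lia|]. f_equal. lia. Qed.

Lemma in_box_flat lo hi A y : (forall t, (t < m * N + m)%nat -> lo t <= coord A y t <= hi t) ->
  in_box m N (mkb lo hi) A y.
Proof. intros H. split; simpl.
  - intros i j Hi Hj. rewrite <- (coordA A y i j) by auto. apply H. nia.
  - intros i Hi. rewrite <- (coordy A y i). apply H. lia. Qed.

Lemma wf_flat lo hi : (forall t, (t < m * N + m)%nat -> lo t <= hi t) -> box_wf m N (mkb lo hi).
Proof. intros H. split; simpl. intros i j Hi Hj. apply H. nia. intros i Hi. apply H. lia. Qed.

Lemma rprod_flat g : rprod m (fun i => rprod N (fun j => g (i * N + j)%nat)) = rprod (m * N) g.
Proof. clear. induction m as [|m' IH]. simpl. auto. simpl rprod at 1. rewrite IH.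
  rewrite Nat.mul_succ_l. rewrite rprod_add. auto. Qed.

Lemma vol_flat lo hi : box_vol m N (mkb lo hi) = rprod (m * N + m) (fun t => hi t - lo t).
Proof. unfold box_vol. simpl. rewrite (rprod_flat (fun t => hi t - lo t)). rewrite rprod_add. auto. Qed.

Lemma coord_decomp t : (t < m * N + m)%nat -> (1 <= N)%nat ->
  (exists i j, (i < m)%nat /\ (j < N)%nat /\ t = (i * N + j)%nat) \/ (exists i, (i < m)%nat /\ t = (m * N + i)%nat).
Proof. intros Ht HN. destruct (Nat.ltb_spec t (m * N)).
  - left. exists (t / N)%nat, (t mod N)%nat. split. apply Nat.Div0.div_lt_upper_bound. lia.
    split. apply Nat.mod_upper_bound. lia. rewrite (Nat.div_mod_eq t N) at 1. lia.
  - right. exists (t - m * N)%nat. split; lia. Qed.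
End Flat.

Definition tau (t0 s : nat) : nat := if Nat.ltb s t0 then s else S s.
Definition sig (t0 t : nat) : nat := if Nat.ltb t t0 then t else pred t.

Lemma tau_prop t0 D s : (t0 < D)%nat -> (s < D - 1)%nat -> (tau t0 s < D)%nat /\ tau t0 s <> t0.
Proof. intros. unfold tau. destruct (Nat.ltb_spec s t0); lia. Qed.

Lemma sig_prop t0 D t : (t0 < D)%nat -> (t < D)%nat -> t <> t0 -> (sig t0 t < D - 1)%nat /\ tau t0 (sig t0 t) = t.
Proof. intros. unfold sig, tau. destruct (Nat.ltb_spec t t0).
  destruct (Nat.ltb_spec t t0); split; lia.
  destruct (Nat.ltb_spec (pred t) t0); split; lia. Qed.

Lemma rprod_nonneg n f : (forall k, (k < n)%nat -> 0 <= f k) -> 0 <= rprod n f.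
Proof. induction n; simpl; intros H. lra. apply Rmult_le_pos. apply IHn; auto. apply H; lia. Qed.

Lemma graph_null m N (S : (nat -> nat -> R) -> (nat -> R) -> Prop) (t0 n : nat) :
  (1 <= N)%nat -> (t0 < m * N + m)%nat ->
  (forall A y, S A y -> forall t, (t < m * N + m)%nat -> Rabs (coord m N A y t) <= INR n) ->
  (forall eta, 0 < eta -> exists del, 0 < del /\ forall A y A' y', S A y -> S A' y' ->
      (forall t, (t < m * N + m)%nat -> t <> t0 -> Rabs (coord m N A y t - coord m N A' y' t) <= del) ->
      Rabs (coord m N A y t0 - coord m N A' y' t0) <= eta) ->
  lebesgue_null m N S.
Proof.
  intros HN Ht0 Hbd Hmod eps Heps.
  set (D := (m * N + m)%nat) in *. set (D' := (D - 1)%nat).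
  set (L := 2 * INR n + 1). assert (HL : 0 < L) by (unfold L; pose proof (pos_INR n); lra).
  assert (HLD : 0 < L ^ D') by (apply pow_lt; auto).
  set (eta := eps / (2 * L ^ D')). assert (Heta : 0 < eta) by (unfold eta; apply Rdiv_lt_0_compat; lra).
  destruct (Hmod eta Heta) as [del [Hdel Hm]].
  destruct (INR_unbounded (L / del)) as [M0 HM0].
  set (M := Datatypes.S M0). assert (HMpos : 0 < INR M) by (unfold M; rewrite S_INR; pose proof (pos_INR M0); lra).
  set (c := L / INR M). assert (Hc : 0 < c) by (unfold c; apply Rdiv_lt_0_compat; lra).
  assert (HcM : INR M * c = L) by (unfold c; field; lra).
  assert (Hcd : c <= del).
  { unfold c. assert (L / del < INR M) by (unfold M; rewrite S_INR; lra).
    apply Rmult_le_reg_r with (INR M); auto. replace (L / INR M * INR M) with L by (field; lra).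
    assert (L < del * INR M). { apply Rmult_lt_reg_r with (/ del). apply Rinv_0_lt_compat; auto.
      replace (del * INR M * / del) with (INR M) by (field; lra). auto. } lra. }
  set (digit := fun s k => ((k / M ^ s) mod M)%nat).
  set (cell := fun k (P : (nat -> nat -> R) * (nat -> R)) => forall s, (s < D')%nat ->
      - INR n + INR (digit s k) * c <= coord m N (fst P) (snd P) (tau t0 s) <= - INR n + INR (digit s k) * c + c).
  set (inh := inhabits ((fun (_ _ : nat) => 0), (fun (_ : nat) => 0))).
  set (pt := fun k => epsilon inh (fun P => S (fst P) (snd P) /\ cell k P)).
  set (a0 := fun k => coord m N (fst (pt k)) (snd (pt k)) t0).
  set (lo := fun k t => if Nat.eq_dec t t0 then a0 k - eta else - INR n + INR (digit (sig t0 t) k) * c).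
  set (hi := fun k t => if Nat.eq_dec t t0 then a0 k + eta else - INR n + INR (digit (sig t0 t) k) * c + c).
  set (B := fun k => if Nat.ltb k (M ^ D') then mkb m N (lo k) (hi k) else mkb m N (fun _ => 0) (fun _ => 0)).
  assert (Hvol : forall k, box_vol m N (B k) = if Nat.ltb k (M ^ D') then 2 * eta * c ^ D' else 0).
  { intros k. unfold B. destruct (Nat.ltb k (M ^ D')); rewrite vol_flat.
    - rewrite (rprod_ext _ _ (fun t => if Nat.eq_dec t t0 then 2 * eta else c)).
      apply rprod_single; auto. intros t _. unfold lo, hi. destruct (Nat.eq_dec t t0); ring.
    - rewrite (rprod_ext _ _ (fun _ => 0)). rewrite rprod_const. fold D. destruct D. lia. simpl; ring.
      intros; ring. }
  exists B. split; [|split].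
  - intros k. unfold B. destruct (Nat.ltb k (M ^ D')); apply wf_flat; intros t Ht.
    unfold lo, hi. destruct (Nat.eq_dec t t0); lra. lra.
  - intros A y HS.
    assert (Henc : exists k, (k < M ^ D')%nat /\ forall s, (s < D')%nat ->
       - INR n + INR (digit s k) * c <= coord m N A y (tau t0 s) <= - INR n + INR (digit s k) * c + c).
    { unfold digit. apply (encode M D' (fun s q => - INR n + INR q * c <= coord m N A y (tau t0 s) <= - INR n + INR q * c + c)). unfold M; lia. intros s Hs.
      destruct (tau_prop t0 D s Ht0 Hs) as [Hts _].
      pose proof (Hbd A y HS (tau t0 s) Hts) as Hb.
      destruct (interval_pick M c (coord m N A y (tau t0 s) + INR n) Hc ltac:(unfold M; lia)) as [q [Hq Hq']].
      { rewrite HcM. unfold L. revert Hb. unfold Rabs. destruct Rcase_abs; intros; lra. }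
      exists q. split; auto. lra. }
    destruct Henc as [k [Hk Hcell]].
    assert (Hpt : S (fst (pt k)) (snd (pt k)) /\ cell k (pt k)).
    { unfold pt. apply epsilon_spec. exists (A, y). split; auto. }
    destruct Hpt as [HSk Hck].
    exists k. unfold B. destruct (Nat.ltb_spec k (M ^ D')); [|lia].
    apply in_box_flat. intros t Ht. unfold lo, hi. destruct (Nat.eq_dec t t0).
    + subst t. assert (Rabs (coord m N A y t0 - a0 k) <= eta).
      { unfold a0. apply Hm; auto. intros t Ht' Hne.
        destruct (sig_prop t0 D t Ht0 Ht' Hne) as [Hs1 Hs2].
        pose proof (Hcell _ Hs1). pose proof (Hck _ Hs1). rewrite Hs2 in *.
        eapply Rle_trans; [|apply Hcd]. apply Rabs_le. lra. }
      revert H0. unfold Rabs. destruct Rcase_abs; intros; lra.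
    + destruct (sig_prop t0 D t Ht0 Ht n0) as [Hs1 Hs2].
      pose proof (Hcell _ Hs1). rewrite Hs2 in H0. auto.
  - intros n'. eapply Rle_trans. apply (rsum_mono_len _ (M ^ D')).
    + intros k. rewrite Hvol. destruct (Nat.ltb k (M ^ D')). pose proof (pow_lt c D' Hc). apply Rmult_le_pos; lra. lra.
    + intros k Hk. rewrite Hvol. destruct (Nat.ltb_spec k (M ^ D')); [lia|auto].
    + rewrite (rsum_ext _ _ (fun _ => 2 * eta * c ^ D')).
      rewrite rsum_const, pow_INR. right. unfold eta.
      replace (INR M ^ D' * (2 * (eps / (2 * L ^ D')) * c ^ D')) with ((INR M * c) ^ D' * eps / L ^ D')
        by (rewrite Rpow_mult_distr; field; lra).
      rewrite HcM. field. lra.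
      intros k Hk. rewrite Hvol. destruct (Nat.ltb_spec k (M ^ D')); [auto|lia].
Qed.

Fixpoint unpair (n : nat) : nat * nat :=
  match n with O => (O, O) | S n' => let (a, b) := unpair n' in
    match b with O => (O, S a) | S b' => (S a, b') end end.
Fixpoint tri (d : nat) : nat := match d with O => O | S d' => (tri d' + S d')%nat end.

Lemma unpair_tri d : unpair (tri d) = (0%nat, d) /\ forall a, (a <= d)%nat -> unpair (tri d + a) = (a, (d - a)%nat).
Proof. induction d as [|d IH].
  - split. auto. intros a Ha. assert (a = 0%nat) by lia. subst. auto.
  - assert (Ha : forall a, (a <= d)%nat -> unpair (tri d + a) = (a, (d - a)%nat)).
    { destruct IH as [IH1 _]. induction a as [|a IHa]; intros Ha. rewrite Nat.add_0_r, IH1. f_equal. lia.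
      rewrite Nat.add_succ_r. simpl. rewrite IHa by lia. destruct (d - a)%nat eqn:E. lia. f_equal. lia. }
    assert (H0 : unpair (tri (S d)) = (0%nat, S d)).
    { simpl. rewrite Nat.add_succ_r. simpl. rewrite Ha by lia. rewrite Nat.sub_diag. auto. }
    split; auto. remember (tri (S d)) as T. clear HeqT.
    induction a as [|a IHa]; intros Ha'. rewrite Nat.add_0_r, H0. f_equal; lia.
    rewrite Nat.add_succ_r. simpl (unpair (S _)). rewrite IHa by lia. destruct (S d - a)%nat eqn:E. lia. f_equal. lia. Qed.

Lemma tri_ge n : (n <= tri n)%nat.
Proof. induction n; simpl; lia. Qed.

Lemma rsum_le_len n K f : (forall k, 0 <= f k) -> (n <= K)%nat -> rsum n f <= rsum K f.
Proof. intros H0 H. induction H as [|K' _ IH]. lra. simpl. pose proof (H0 K'). lra. Qed.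

Lemma sum_diag D g : rsum (tri D) (fun n => g (fst (unpair n)) (snd (unpair n))) =
  rsum D (fun a => rsum (D - a) (fun b => g a b)).
Proof. induction D as [|D IH]. simpl. auto.
  simpl tri. rewrite rsum_add, IH.
  rewrite (rsum_ext (S D) (fun k => g (fst (unpair (tri D + k))) (snd (unpair (tri D + k)))) (fun a => g a (D - a)%nat)).
  2:{ intros k Hk. destruct (unpair_tri D) as [_ H]. rewrite H by lia. auto. }
  change (rsum (S D) (fun a => rsum (S D - a) (fun b => g a b))) with
    (rsum D (fun a => rsum (S D - a) (fun b => g a b)) + rsum (S D - D) (fun b => g D b)).
  replace (S D - D)%nat with 1%nat by lia. simpl (rsum 1 _).
  change (rsum (S D) (fun a => g a (D - a)%nat)) with (rsum D (fun a => g a (D - a)%nat) + g D (D - D)%nat).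
  rewrite Nat.sub_diag.
  rewrite (rsum_ext D (fun a => rsum (S D - a) (fun b => g a b)) (fun a => rsum (D - a) (fun b => g a b) + g a (D - a)%nat)).
  2:{ intros a Ha. replace (S D - a)%nat with (S (D - a)) by lia. auto. }
  rewrite rsum_plus. lra. Qed.

Lemma geo_sum eps D : rsum D (fun a => eps / 2 ^ (S a)) = eps - eps / 2 ^ D.
Proof. induction D. simpl. field. change (rsum (S D) (fun a => eps / 2 ^ S a)) with (rsum D (fun a => eps / 2 ^ S a) + eps / 2 ^ S D).
  rewrite IHD. simpl. field. apply pow_nonzero. lra. Qed.

Lemma rprod_nonneg' n f : (forall k, (k < n)%nat -> 0 <= f k) -> 0 <= rprod n f.
Proof. induction n; simpl; intros H. lra. apply Rmult_le_pos. apply IHn; auto. apply H; lia. Qed.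

Lemma box_vol_nonneg m N b : box_wf m N b -> 0 <= box_vol m N b.
Proof. intros [H1 H2]. unfold box_vol. apply Rmult_le_pos.
  - apply rprod_nonneg'. intros i Hi. apply rprod_nonneg'. intros j Hj. pose proof (H1 i j Hi Hj). lra.
  - apply rprod_nonneg'. intros i Hi. pose proof (H2 i Hi). lra.
Qed.

Lemma union_null m N (S : (nat -> nat -> R) -> (nat -> R) -> Prop) (F : nat -> (nat -> nat -> R) -> (nat -> R) -> Prop) :
  (forall A y, S A y -> exists k, F k A y) -> (forall k, lebesgue_null m N (F k)) -> lebesgue_null m N S.
Proof. intros HS HF eps Heps.
  assert (He : forall k, 0 < eps / 2 ^ (Datatypes.S k)) by (intros; apply Rdiv_lt_0_compat; auto; apply pow_lt; lra).
  set (Bk := fun k => proj1_sig (constructive_indefinite_description _ (HF k _ (He k)))).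
  assert (HBk : forall k, (forall l, box_wf m N (Bk k l)) /\ (forall A y, F k A y -> exists l, in_box m N (Bk k l) A y) /\
     (forall n, rsum n (fun l => box_vol m N (Bk k l)) <= eps / 2 ^ (Datatypes.S k))).
  { intros k. unfold Bk. destruct constructive_indefinite_description; auto. }
  exists (fun n => Bk (fst (unpair n)) (snd (unpair n))). split; [|split].
  - intros n. apply HBk.
  - intros A y HSy. destruct (HS A y HSy) as [k Hk]. destruct (proj1 (proj2 (HBk k)) A y Hk) as [l Hl].
    exists (tri (k + l) + k)%nat. destruct (unpair_tri (k + l)) as [_ H]. rewrite H by lia. simpl.
    replace (k + l - k)%nat with l by lia. auto.
  - intros n. eapply Rle_trans. apply (rsum_le_len n (tri n)). intros k. apply box_vol_nonneg. apply HBk. apply tri_ge.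
    rewrite (sum_diag n (fun a b => box_vol m N (Bk a b))).
    eapply Rle_trans. apply rsum_le. intros a _. apply (proj2 (proj2 (HBk a))).
    rewrite geo_sum. assert (0 < eps / 2 ^ n) by (apply Rdiv_lt_0_compat; auto; apply pow_lt; lra). lra. Qed.

Lemma min_bounds m N p lam A y x cb : 1 < p -> 0 < lam -> is_minimizer m N p lam A y x ->
  (forall i, (i < m)%nat -> Rabs (y i) <= cb) ->
  (forall i, (i < m)%nat -> Rabs (y i - matvec N A x i) <= INR m * cb ^ 2 + 1) /\
  (forall k, (k < N)%nat -> Rabs (x k) <= INR m * cb ^ 2 / lam + 1).
Proof. intros Hp Hl Hx Hy. destruct (resid_bound m N p lam A y x Hl Hx) as [H1 H2].
  assert (Hy2 : rsum m (fun i => y i ^ 2) <= INR m * cb ^ 2).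
  { rewrite <- rsum_const. apply rsum_le. intros i Hi. pose proof (Hy i Hi). apply pow_maj_Rabs; auto. }
  split.
  - intros i Hi. eapply Rle_trans. apply abs_le_sq.
    pose proof (rsum_term_le m (fun i => (matvec N A x i - y i) ^ 2) i ltac:(intros; apply pow2_ge_0) Hi).
    cbv beta in *. replace ((y i - matvec N A x i) ^ 2) with ((matvec N A x i - y i) ^ 2) by ring. lra.
  - intros k Hk. pose proof (abspow_ge p (x k) ltac:(lra)).
    pose proof (rsum_term_le N (fun j => abspow p (x j)) k ltac:(intros; apply abspow_nonneg) Hk). cbv beta in *.
    assert (lam * abspow p (x k) <= INR m * cb ^ 2).
    { assert (lam * abspow p (x k) <= lam * rsum N (fun j => abspow p (x j))) by (apply Rmult_le_compat_l; lra).
      assert (0 <= INR m * cb ^ 2) by (apply Rmult_le_pos; [apply pos_INR|apply pow2_ge_0]). lra. }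
    assert (abspow p (x k) <= INR m * cb ^ 2 / lam).
    { apply Rmult_le_reg_l with lam; auto. replace (lam * (INR m * cb ^ 2 / lam)) with (INR m * cb ^ 2) by (field; lra). auto. }
    lra. Qed.

Definition Xmin m N p lam (Hp : 1 < p) (Hl : 0 < lam) A y : nat -> R :=
  proj1_sig (constructive_indefinite_description _ (exists_min m N p lam A y Hp Hl)).

Lemma Xmin_spec m N p lam Hp Hl A y : is_minimizer m N p lam A y (Xmin m N p lam Hp Hl A y).
Proof. unfold Xmin. destruct constructive_indefinite_description; auto. Qed.

Definition rho m N p lam Hp Hl (j : nat) A y i : R :=
  y i - matvec N (zcol A j) (Xmin m N p lam Hp Hl (zcol A j) y) i.

Lemma bad_in_T m N p lam (Hp : 1 < p) (Hl : 0 < lam) A y :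
  ~ (exists x : nat -> R, is_minimizer m N p lam A y x /\
         (forall z, is_minimizer m N p lam A y z -> forall j, (j < N)%nat -> z j = x j) /\
         (forall j, (j < N)%nat -> x j <> 0)) ->
  exists j, (j < N)%nat /\ rsum m (fun i => A i j * rho m N p lam Hp Hl j A y i) = 0.
Proof. intros Hbad. set (x := Xmin m N p lam Hp Hl A y).
  assert (Hx : is_minimizer m N p lam A y x) by apply Xmin_spec.
  assert (exists j, (j < N)%nat /\ x j = 0).
  { apply NNPP. intros Hn. apply Hbad. exists x. split; auto. split.
    intros z Hz j Hj. apply (unique_min m N p lam A y x z); auto.
    intros j Hj Hx0. apply Hn. exists j; auto. }
  destruct H as [j [Hj Hx0]]. exists j. split; auto.
  pose proof (min_zcol m N p lam A y x j Hp Hl Hx Hj Hx0) as Hz.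
  pose proof (Xmin_spec m N p lam Hp Hl (zcol A j) y) as Hz'.
  assert (Heq : forall k, (k < N)%nat -> Xmin m N p lam Hp Hl (zcol A j) y k = x k).
  { intros. apply (unique_min m N p lam (zcol A j) y x); auto. }
  rewrite <- (zero_coord m N p lam A y x j Hp Hl Hx Hj Hx0). apply rsum_ext. intros i Hi.
  unfold rho. f_equal. f_equal. rewrite (matvec_ext N (zcol A j) _ x) by auto.
  unfold matvec. apply rsum_ext. intros k Hk. unfold zcol. destruct (Nat.eq_dec k j). subst. rewrite Hx0. ring. auto. Qed.

Lemma flat_inj k l i j N : (l < N)%nat -> (j < N)%nat -> (k * N + l)%nat = (i * N + j)%nat -> l = j.
Proof. intros Hl Hj E. apply (f_equal (fun t => (t mod N)%nat)) in E.
  rewrite !(Nat.add_comm (_ * N)), !Nat.Div0.mod_add, !Nat.mod_small in E; auto. Qed.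

Definition bnd m N (n : nat) A y := forall t, (t < m * N + m)%nat -> Rabs (coord m N A y t) <= INR n.

Lemma piece_modulus m N p lam Hp Hl j i n : (i < m)%nat -> (j < N)%nat ->
  forall eta, 0 < eta -> exists del, 0 < del /\ forall A y A' y',
  (bnd m N n A y /\ rsum m (fun k => A k j * rho m N p lam Hp Hl j A y k) = 0 /\ / (INR n + 1) <= Rabs (rho m N p lam Hp Hl j A y i)) ->
  (bnd m N n A' y' /\ rsum m (fun k => A' k j * rho m N p lam Hp Hl j A' y' k) = 0 /\ / (INR n + 1) <= Rabs (rho m N p lam Hp Hl j A' y' i)) ->
  (forall t, (t < m * N + m)%nat -> t <> (i * N + j)%nat -> Rabs (coord m N A y t - coord m N A' y' t) <= del) ->
  Rabs (coord m N A y (i * N + j) - coord m N A' y' (i * N + j)) <= eta.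
Proof. intros Hi Hj eta Heta.
  set (cb := INR n). assert (Hcb : 0 <= cb) by apply pos_INR.
  set (R := INR m * cb ^ 2 + 1). assert (HR : 1 <= R) by (unfold R; pose proof (pos_INR m); pose proof (pow2_ge_0 cb); nra).
  set (Xb := INR m * cb ^ 2 / lam + 1).
  assert (HXb : 1 <= Xb) by (unfold Xb; assert (0 <= INR m * cb ^ 2 / lam) by (apply Rmult_le_pos; [apply Rmult_le_pos; [apply pos_INR|apply pow2_ge_0]| left; apply Rinv_0_lt_compat; auto]); lra).
  set (K := INR m * (2 * R + 2 * (R * (INR N * Xb)))).
  assert (HK : 0 <= K) by (unfold K; pose proof (pos_INR m); pose proof (pos_INR N);
     apply Rmult_le_pos; auto; assert (0 <= R * (INR N * Xb)) by (apply Rmult_le_pos; [lra| apply Rmult_le_pos; lra]); lra).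
  set (G := cb + INR m * (R + cb)). assert (HG : 0 <= G) by (unfold G; pose proof (pos_INR m); nra).
  set (sg := eta / ((INR n + 1) * G + 1)).
  assert (Hn1 : 0 < INR n + 1) by (pose proof (pos_INR n); lra).
  assert (Hsg : 0 < sg) by (unfold sg; apply Rdiv_lt_0_compat; auto; nra).
  assert (Hsg2 : (INR n + 1) * (sg * G) <= eta).
  { unfold sg. replace ((INR n + 1) * (eta / ((INR n + 1) * G + 1) * G)) with (eta * (((INR n + 1) * G) / ((INR n + 1) * G + 1))) by (field; nra).
    assert (((INR n + 1) * G) / ((INR n + 1) * G + 1) <= 1).
    { apply Rmult_le_reg_r with ((INR n + 1) * G + 1). nra. unfold Rdiv. rewrite Rmult_assoc, Rinv_l by nra. nra. } nra. }
  exists (Rmin sg (sg ^ 2 / (K + 1))). split.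
  { apply Rmin_pos; auto. apply Rdiv_lt_0_compat. apply pow_lt; auto. lra. }
  intros A y A' y' [Hb [He Hr]] [Hb' [He' Hr']] Hc.
  set (del := Rmin sg (sg ^ 2 / (K + 1))) in *.
  assert (Hd1 : del <= sg) by apply Rmin_l. assert (Hd2 : del <= sg ^ 2 / (K + 1)) by apply Rmin_r.
  assert (Hdel0 : 0 <= del). { specialize (Hc (m * N)%nat ltac:(lia) ltac:(nia)). pose proof (Rabs_pos (coord m N A y (m * N) - coord m N A' y' (m * N))). lra. }
  assert (HyA : forall k, (k < m)%nat -> Rabs (y k) <= cb) by (intros k Hk; rewrite <- (coordy m N A y k); apply Hb; lia).
  assert (HyA' : forall k, (k < m)%nat -> Rabs (y' k) <= cb) by (intros k Hk; rewrite <- (coordy m N A' y' k); apply Hb'; lia).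
  assert (HAb' : forall k l, (k < m)%nat -> (l < N)%nat -> Rabs (A' k l) <= cb) by (intros k l Hk Hl'; rewrite <- (coordA m N A' y' k l) by auto; apply Hb'; nia).
  set (B := zcol A j). set (B' := zcol A' j).
  set (x := Xmin m N p lam Hp Hl B y). set (x' := Xmin m N p lam Hp Hl B' y').
  pose proof (Xmin_spec m N p lam Hp Hl B y) as Hx. pose proof (Xmin_spec m N p lam Hp Hl B' y') as Hx'.
  fold x in Hx. fold x' in Hx'.
  destruct (min_bounds m N p lam B y x cb Hp Hl Hx HyA) as [HR1 HX1].
  destruct (min_bounds m N p lam B' y' x' cb Hp Hl Hx' HyA') as [HR2 HX2].
  assert (HBd : forall k l, (k < m)%nat -> (l < N)%nat -> Rabs (B k l - B' k l) <= del).
  { intros k l Hk Hl'. unfold B, B', zcol. destruct (Nat.eq_dec l j). rewrite Rminus_diag, Rabs_R0; auto.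
    rewrite <- (coordA m N A y k l), <- (coordA m N A' y' k l) by auto. apply Hc. nia.
    intro E. apply n0. apply (flat_inj k l i j N); auto. }
  assert (Hyd : forall k, (k < m)%nat -> Rabs (y k - y' k) <= del).
  { intros k Hk. rewrite <- (coordy m N A y k), <- (coordy m N A' y' k). apply Hc. lia. nia. }
  assert (Hrho : forall k, (k < m)%nat -> Rabs (rho m N p lam Hp Hl j A y k - rho m N p lam Hp Hl j A' y' k) <= sg).
  { intros k Hk. pose proof (holder m N p lam B B' y y' x x' del R Xb Hp Hl Hx Hx' HBd Hyd HR1 HR2 HX1 HX2 k Hk) as Hh.
    unfold rho. fold B B' x x'.
    assert (del * K <= sg ^ 2).
    { apply Rle_trans with (sg ^ 2 / (K + 1) * K). apply Rmult_le_compat_r; auto.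
      unfold Rdiv. rewrite Rmult_assoc. assert (/ (K + 1) * K <= 1).
      { apply Rmult_le_reg_l with (K + 1). lra. rewrite <- Rmult_assoc, Rinv_r by lra. lra. }
      pose proof (pow2_ge_0 sg). nra. }
    assert (Hsq : (y k - matvec N B x k - (y' k - matvec N B' x' k)) ^ 2 <= sg ^ 2).
    { eapply Rle_trans. apply Hh. unfold K in *. nra. }
    rewrite <- (Rabs_right sg) by lra. apply Rsqr_le_abs_0. unfold Rsqr. simpl in Hsq. lra. }
  assert (Hrb : forall k, (k < m)%nat -> Rabs (rho m N p lam Hp Hl j A y k) <= R).
  { intros k Hk. unfold rho. apply HR1; auto. }
  set (f := fun k => A k j * rho m N p lam Hp Hl j A y k).
  set (f' := fun k => A' k j * rho m N p lam Hp Hl j A' y' k).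
  assert (Hiso : f i - f' i = rsum m (fun k => if Nat.eq_dec k i then 0 else f' k - f k)).
  { rewrite (rsum_ext m _ (fun k => (if Nat.eq_dec k i then 0 else f' k) - (if Nat.eq_dec k i then 0 else f k))).
    rewrite rsum_minus. fold f in He. fold f' in He'. rewrite (rsum_isolate m f i Hi) in He. rewrite (rsum_isolate m f' i Hi) in He'. lra.
    intros k _. destruct (Nat.eq_dec k i); ring. }
  assert (Hrest : Rabs (rsum m (fun k => if Nat.eq_dec k i then 0 else f' k - f k)) <= INR m * (sg * R + cb * sg)).
  { eapply Rle_trans. apply rsum_abs. rewrite <- rsum_const. apply rsum_le. intros k Hk.
    destruct (Nat.eq_dec k i). rewrite Rabs_R0. pose proof (Rabs_pos (rho m N p lam Hp Hl j A y k)). nra.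
    unfold f, f'. set (r := rho m N p lam Hp Hl j A y k). set (r' := rho m N p lam Hp Hl j A' y' k).
    replace (A' k j * r' - A k j * r) with (- ((A k j - A' k j) * r) - A' k j * (r - r')) by ring.
    eapply Rle_trans. apply Rabs_triang. rewrite Rabs_Ropp, Rabs_Ropp, !Rabs_mult.
    assert (Rabs (A k j - A' k j) <= sg).
    { rewrite <- (coordA m N A y k j), <- (coordA m N A' y' k j) by auto. eapply Rle_trans; [|apply Hd1].
      apply Hc. nia. intro E. apply n0. assert ((k * N)%nat = (i * N)%nat) by lia. nia. }
    apply Rplus_le_compat; apply Rmult_le_compat; try apply Rabs_pos. auto. apply Hrb; auto. apply HAb'; auto. apply Hrho; auto. }
  assert (Hai : Rabs ((A i j - A' i j) * rho m N p lam Hp Hl j A y i) <= sg * G).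
  { replace ((A i j - A' i j) * rho m N p lam Hp Hl j A y i) with
      ((f i - f' i) - A' i j * (rho m N p lam Hp Hl j A y i - rho m N p lam Hp Hl j A' y' i)) by (unfold f, f'; ring).
    eapply Rle_trans. apply Rabs_triang. rewrite Rabs_Ropp, Rabs_mult, Hiso.
    assert (Rabs (A' i j) * Rabs (rho m N p lam Hp Hl j A y i - rho m N p lam Hp Hl j A' y' i) <= cb * sg)
      by (apply Rmult_le_compat; try apply Rabs_pos; auto).
    unfold G. lra. }
  rewrite (coordA m N A y i j), (coordA m N A' y' i j) by auto.
  rewrite Rabs_mult in Hai.
  assert (Rabs (A i j - A' i j) * / (INR n + 1) <= sg * G).
  { eapply Rle_trans; [|apply Hai]. apply Rmult_le_compat_l; auto. apply Rabs_pos. }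
  assert (Rabs (A i j - A' i j) <= (INR n + 1) * (sg * G)).
  { apply Rmult_le_reg_r with (/ (INR n + 1)). apply Rinv_0_lt_compat; auto.
    replace ((INR n + 1) * (sg * G) * / (INR n + 1)) with (sg * G) by (field; lra). auto. }
  lra. Qed.

Lemma empty_null m N (S : (nat -> nat -> R) -> (nat -> R) -> Prop) : (1 <= m)%nat -> (forall A y, ~ S A y) -> lebesgue_null m N S.
Proof. intros Hm H eps Heps. exists (fun _ => mkBox (fun _ _ => 0) (fun _ _ => 0) (fun _ => 0) (fun _ => 0)).
  split; [|split].
  - intros k. split; simpl; intros; lra.
  - intros A y HS. exfalso. apply (H A y HS).
  - intros n. unfold box_vol. simpl.
    rewrite (rsum_ext n _ (fun _ => 0)). rewrite rsum_zero. lra.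
    intros k _. rewrite (rprod_ext m (fun _ => 0 - 0) (fun _ => 0)) by (intros; ring).
    rewrite rprod_const. destruct m. lia. simpl. ring. Qed.

Lemma bnd_exists (f : nat -> R) D : exists n, forall t, (t < D)%nat -> Rabs (f t) <= INR n.
Proof. induction D. exists 0%nat. intros; lia. destruct IHD as [n Hn].
  destruct (INR_unbounded (Rabs (f D))) as [n2 Hn2]. exists (Nat.max n n2). intros t Ht.
  destruct (Nat.eq_dec t D). subst. pose proof (le_INR n2 (Nat.max n n2) ltac:(lia)). lra.
  pose proof (le_INR n (Nat.max n n2) ltac:(lia)). pose proof (Hn t ltac:(lia)). lra. Qed.

Lemma lower_exists r : r <> 0 -> exists n, / (INR n + 1) <= Rabs r.
Proof. intros Hr. pose proof (Rabs_pos r). pose proof (Rabs_no_R0 r Hr).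
  destruct (INR_unbounded (/ Rabs r)) as [n Hn]. exists n. pose proof (pos_INR n).
  apply Rmult_le_reg_r with (INR n + 1). lra. rewrite Rinv_l by lra.
  assert (Rabs r * / Rabs r = 1) by (field; lra). nra. Qed.

Definition Qpiece m N p lam Hp Hl (j i n : nat) A y : Prop :=
  bnd m N n A y /\ (j < N)%nat /\
  (((i < m)%nat /\ rsum m (fun k => A k j * rho m N p lam Hp Hl j A y k) = 0 /\ / (INR n + 1) <= Rabs (rho m N p lam Hp Hl j A y i)) \/
   (i = m /\ forall i', (i' < m)%nat -> y i' = 0)).

Lemma Qpiece_null m N p lam Hp Hl j i n : (1 <= m)%nat -> (m <= N)%nat -> lebesgue_null m N (Qpiece m N p lam Hp Hl j i n).
Proof. intros Hm HmN. destruct (Compare_dec.lt_dec j N) as [Hj|Hj].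
  2:{ apply empty_null; auto. intros A y [_ [H _]]. lia. }
  destruct (Compare_dec.lt_eq_lt_dec i m) as [[Hi|Hi]|Hi].
  - apply (graph_null m N _ (i * N + j) n). lia. nia.
    + intros A y [Hb _]. apply Hb.
    + intros eta Heta. destruct (piece_modulus m N p lam Hp Hl j i n Hi Hj eta Heta) as [del [Hdel H]].
      exists del. split; auto. intros A y A' y' [Hb [_ [H1|[H1 _]]]] [Hb' [_ [H2|[H2 _]]]] Hc; try lia.
      apply H; auto. split; auto. destruct H1 as [_ H1]; auto. split; auto. destruct H2 as [_ H2]; auto.
  - subst i. apply (graph_null m N _ (m * N) n). lia. lia.
    + intros A y [Hb _]. apply Hb.
    + intros eta Heta. exists 1. split. lra. intros A y A' y' [_ [_ [[H1 _]|[_ H1]]]] [_ [_ [[H2 _]|[_ H2]]]] _; try lia.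
      replace (m * N)%nat with (m * N + 0)%nat by lia. rewrite !coordy, H1, H2 by lia.
      rewrite Rminus_diag, Rabs_R0. lra.
  - apply empty_null; auto. intros A y [_ [_ [[H _]|[H _]]]]; lia. Qed.

Definition Fk m N p lam Hp Hl (k : nat) A y : Prop :=
  Qpiece m N p lam Hp Hl (fst (unpair (fst (unpair k)))) (snd (unpair (fst (unpair k)))) (snd (unpair k)) A y.

Lemma unpair_pair a b : unpair (tri (a + b) + a) = (a, b).
Proof. destruct (unpair_tri (a + b)) as [_ H]. rewrite H by lia. f_equal. lia. Qed.

Lemma bnd_mono m N n n' A y : (n <= n')%nat -> bnd m N n A y -> bnd m N n' A y.
Proof. intros H Hb t Ht. pose proof (le_INR _ _ H). pose proof (Hb t Ht). lra. Qed.

Theorem theorem4p2 (p lam : R) (m N : nat)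
  (hp : 1 < p) (hm : (1 <= m)%nat) (hNm : (m <= N)%nat) (hlam : 0 < lam) :
  lebesgue_null m N (fun A y =>
    ~ (exists x : nat -> R,
         is_minimizer m N p lam A y x /\
         (forall z, is_minimizer m N p lam A y z -> forall j, (j < N)%nat -> z j = x j) /\
         (forall j, (j < N)%nat -> x j <> 0))).
Proof.
  apply (union_null m N _ (Fk m N p lam hp hlam)).
  2:{ intros k. apply Qpiece_null; auto. }
  intros A y Hbad. destruct (bad_in_T m N p lam hp hlam A y Hbad) as [j [Hj Hsum]].
  destruct (bnd_exists (coord m N A y) (m * N + m)) as [n1 Hn1].
  destruct (classic (forall i, (i < m)%nat -> rho m N p lam hp hlam j A y i = 0)) as [Hz|Hnz].
  - exists (tri (tri (j + m) + j + n1) + (tri (j + m) + j))%nat. unfold Fk. rewrite unpair_pair. cbn [fst snd]. rewrite unpair_pair. cbn [fst snd].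
    split. intros t Ht. apply Hn1; auto. split; auto. right. split; auto.
    apply (resid_zero m N p lam (zcol A j) y (Xmin m N p lam hp hlam (zcol A j) y) hp hlam).
    apply Xmin_spec. intros i Hi. apply Hz; auto.
  - apply not_all_ex_not in Hnz. destruct Hnz as [i Hi]. apply imply_to_and in Hi. destruct Hi as [Hi Hr].
    destruct (lower_exists _ Hr) as [n2 Hn2].
    set (n := Nat.max n1 n2).
    exists (tri (tri (j + i) + j + n) + (tri (j + i) + j))%nat. unfold Fk. rewrite unpair_pair. cbn [fst snd]. rewrite unpair_pair. cbn [fst snd].
    split. apply (bnd_mono m N n1 n). unfold n; lia. intros t Ht. apply Hn1; auto.
    split; auto. left. split; auto. split; auto.
    eapply Rle_trans; [|apply Hn2]. apply Rinv_le_contravar. pose proof (pos_INR n2); lra.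
    pose proof (le_INR n2 n ltac:(unfold n; lia)). lra.
Qed.
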